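(* Suppose no agent is faulty, the directed graph $G$ on $\{1,\dots,n\}$ is strongly connected, and every agent runs Failure-free BFL. Let $\lambda=\big(1-(1/n)^n\big)^{1/n}$, let $\theta\neq\theta^*$, and let $\psi_t^i(\theta,\theta^* )=\log\frac{\mu_t^i(\theta)}{\mu_t^i(\theta^* )}$. Then for each agent $i$ and each $t\ge1$, $$\mathbb{E}^*\big[\psi_t^i(\theta,\theta^* )\big]\le\frac{nC_0}{(1-\frac{1}{n^n})(1-\lambda)}\,t-\frac{C_1}{2n^n}\,t^2 .$$
   Context: Finite hypothesis set $\Theta=\{\theta_1,\dots,\theta_m\}$, true state $\theta^*$. Agent $i$ has finite signal space $\mathcal{S}_i$ and likelihoods $\ell_i(\cdot\mid\theta)$ with full support; in iteration $t$ it observes $s_t^i\sim\ell_i(\cdot\mid\theta^* )$, independently across agents and iterations; $\ell_i(s_{1,t}^i\mid\theta)=\prod_{r=1}^t\ell_i(s_r^i\mid\theta)$. $\mathbb{E}^*$ denotes expectation when signals are drawn under $\theta^*$. $\mathcal{I}_i$ is the set of incoming neighbors of $i$. Failure-free BFL: $\mu_0^i$ uniform on $\Theta$; in iteration $t$, agent $i$ receives $\mu_{t-1}^j$ from all $j\in\mathcal{I}_i$ and sets $\mu_t^i(\theta)\propto\ell_i(s_{1,t}^i\mid\theta)\prod_{j\in\mathcal{I}_i\cup\{i\}}\mu_{t-1}^j(\theta)^{1/(|\mathcal{I}_i|+1)}$, normalized over $\Theta$. Constants: $-C_0=\min_{i}\min_{\theta_1\ne\theta_2\in\Theta}\min_{w\in\mathcal{S}_i}\log\frac{\ell_i(w\mid\theta_1)}{\ell_i(w\mid\theta_2)}$,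 and $C_1=\min_{\theta,\theta'\in\Theta,\ \theta\neq\theta'}\sum_{i=1}^nD(\ell_i(\cdot\mid\theta')\|\ell_i(\cdot\mid\theta))$, where $D$ is the Kullback–Leibler divergence $D(p\|q)=\sum_wp(w)\log\frac{p(w)}{q(w)}$. *)

(* Defs.v *)
From HB Require Import structures.
From mathcomp Require Import all_boot all_order all_algebra.
From mathcomp Require Import reals exp.
Set Implicit Arguments. Unset Strict Implicit. Unset Printing Implicit Defensive.
Import Order.TTheory GRing.Theory Num.Theory.
Local Open Scope ring_scope.

Section BFL.
Variables (R : realType) (T : finType) (n : nat).
Variable (S : 'I_n -> finType).

Definition profile := {dffun forall i : 'I_n, S i}.

(* Likelihoods: lik i w th = l_i(w | th). *)
Variable lik : forall i : 'I_n, S i -> T -> R.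

(* Directed graph: E j i = there is an edge j -> i (i receives from j). *)
Variable E : rel 'I_n.

Definition in_nbrs (i : 'I_n) : {set 'I_n} := [set j | (j != i) && E j i].

(* A history is a sequence of profiles in reverse chronological order:
   [:: s_t; s_(t-1); ...; s_1]. *)
Definition cumlik (i : 'I_n) (hist : seq profile) (th : T) : R :=
  \prod_(p <- hist) lik (p i) th.

(* Failure-free BFL beliefs mu_t^i(th), t = size hist. *)
Fixpoint belief (hist : seq profile) : 'I_n -> T -> R :=
  match hist with
  | [::] => fun _ _ => (#|T|%:R)^-1
  | p :: rest =>
      fun i th =>
        let v := fun th' : T =>
          cumlik i (p :: rest) th' *
          \prod_(j | (j == i) || (j \in in_nbrs i))
             (belief rest j th') `^ ((#|in_nbrs i|.+1)%:R^-1) in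
        v th / \sum_(th' : T) v th'
  end.

(* E^*: expectation of f over t iterations of i.i.d. signals drawn under
   thstar, independently across agents and iterations. *)
Definition expect (thstar : T) (t : nat) (f : seq profile -> R) : R :=
  \sum_(h : t.-tuple profile)
     (\prod_(p <- h) \prod_(i : 'I_n) lik (p i) thstar) * f h.

Definition KL (i : 'I_n) (p q : S i -> R) : R :=
  \sum_(w : S i) p w * ln (p w / q w).

End BFL.

Definition is_min_of (R : realType) (P : R -> Prop) (x : R) : Prop :=
  P x /\ (forall y, P y -> x <= y).

(* Main.v *)
Require Import Defs.
From HB Require Import structures.
From mathcomp Require Import all_boot all_order all_algebra.
From mathcomp Require Import reals exp.
From mathcomp Require Import ring lra.
Import Order.TTheory GRing.Theory Num.Theory.
Local Open Scope ring_scope.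

Lemma sum_dffun (R : realType) (I : finType) (S : I -> finType)
  (F : forall i, S i -> R) :
  \sum_(p : {dffun forall i, S i}) \prod_i F i (p i) = \prod_i \sum_(w : S i) F i w.
Proof.
have [i0 /eqP S0 | Sne] := pickP (fun i => #|S i| == 0%N).
  rewrite (bigD1 i0) //= [X in X * _]big1 ?mul0r; last first.
    by move=> w; have := card0_eq S0 w; rewrite !inE.
  rewrite big1 // => p _.
  by have := card0_eq S0 (p i0); rewrite !inE.
have [p0 _] : exists p0 : (forall i, S i), forall i : I, True.
  have ex i : exists w : S i, True.
    have : #|S i| != 0%N by rewrite Sne.
    by rewrite -lt0n => /card_gt0P [w _]; exists w.
  exact: (@fin_all_exists I (fun i => S i) (fun i _ => True) ex).
pose J := {k : I & S k}.
have sig1 i : \sum_(w : S i) F i w = \sum_(j : J | tag j == i) F (tag j) (tagged j).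
  rewrite -(@sig_big_dep _ _ _ I S predT (fun k (w : S k) => k == i) F) /=.
  rewrite [RHS](bigD1 i) //= [X in _ + X]big1 ?addr0; last first.
    by move=> k kn; rewrite big1 // => w; rewrite (negbTE kn).
  by apply: eq_bigl => w; rewrite eqxx.
under eq_bigr do rewrite sig1.
rewrite (bigA_distr_big_dep (fun i (j : J) => tag j == i) (fun _ (j : J) => F (tag j) (tagged j))).
pose h (p : {dffun forall i, S i}) : {ffun I -> J} := [ffun i => Tagged S (p i)].
pose h' (f : {ffun I -> J}) : {dffun forall i, S i} :=
  [ffun i => if tag (f i) =P i is ReflectT e then etagged e else p0 i].
rewrite (reindex h); last first.
  exists h' => [p _ | f /familyP Ff].
    apply/ffunP => i; rewrite /h' /h !ffunE.
    case: eqP => [e|]; last by [].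
    by rewrite (eq_axiomK e).
  apply/ffunP => i; rewrite /h /h' !ffunE.
  case: eqP => [e|/eqP]; first exact: etaggedK.
  by move=> ne; have := Ff i; rewrite unfold_in (negbTE ne).
symmetry; apply: eq_big => [p | p _].
  by apply/familyP => i; rewrite /h ffunE unfold_in /=.
by apply: eq_bigr => i _; rewrite /h ffunE.
Qed.

Arguments sum_dffun {R I S} F.

Section Main.
Variables (R : realType) (T : finType) (thstar : T) (n : nat)
  (S : 'I_n -> finType) (lik : forall i : 'I_n, S i -> T -> R).

Local Notation prof := (profile S).
Definition wt (p : prof) : R := \prod_(k : 'I_n) lik k (p k) thstar.

Lemma expect_cons t (f : seq prof -> R) :
  expect lik thstar t.+1 f =
  \sum_(p : prof) wt p * expect lik thstar t (fun r => f (p :: r)).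
Proof.
rewrite /expect.
rewrite (reindex (fun pr : prof * t.-tuple prof => [tuple of pr.1 :: pr.2])); last first.
  exists (fun u : t.+1.-tuple prof => (thead u, [tuple of behead u])).
    move=> [p r] _ /=; rewrite theadE; congr (_, _).
    by apply: val_inj.
  by move=> u _ /=; rewrite -tuple_eta.
rewrite -(pair_bigA _ (fun p (r : t.-tuple prof) => (\prod_(q <- [tuple of p :: r]) wt q) * f (p :: r))) /=; apply: eq_bigr => p _.
rewrite big_distrr /=; apply: eq_bigr => r _.
by rewrite big_cons /wt mulrA.
Qed.

Hypothesis lik_pos : forall (i : 'I_n) (w : S i) (th : T), 0 < lik i w th.
Hypothesis lik_sum : forall (i : 'I_n) (th : T), \sum_(w : S i) lik i w th = 1.

Local Notation Ex := (expect lik thstar).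

Lemma expect_ext t f g : (forall h : seq prof, size h = t -> f h = g h) -> Ex t f = Ex t g.
Proof. by move=> fg; apply: eq_bigr => h _; rewrite fg // size_tuple. Qed.

Lemma expectD t f g : Ex t (fun h => f h + g h) = Ex t f + Ex t g.
Proof. by rewrite /expect -big_split; apply: eq_bigr => h _; rewrite mulrDr. Qed.

Lemma expectZ t c f : Ex t (fun h => c * f h) = c * Ex t f.
Proof. by rewrite /expect mulr_sumr; apply: eq_bigr => h _; rewrite mulrCA. Qed.

Lemma expect_sum t (I : finType) (P : pred I) (F : I -> seq prof -> R) :
  Ex t (fun h => \sum_(k | P k) F k h) = \sum_(k | P k) Ex t (F k).
Proof.
rewrite /expect (exchange_big); apply: eq_bigr => h _.
by rewrite mulr_sumr.
Qed.

Lemma expect0 f : Ex 0 f = f [::].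
Proof.
rewrite /expect (big_pred1 [tuple]) => [|h]; first by rewrite big_nil mul1r.
by rewrite (tuple0 h); apply/esym/eqP.
Qed.

Lemma wt_sum : \sum_(p : prof) wt p = 1.
Proof.
rewrite /wt (sum_dffun (fun k (w : S k) => lik k w thstar)).
by apply: big1 => k _; rewrite lik_sum.
Qed.

Lemma expect_const t c : Ex t (fun _ => c) = c.
Proof.
elim: t => [|t IH]; first by rewrite expect0.
rewrite expect_cons; under eq_bigr do rewrite IH.
by rewrite -mulr_suml wt_sum mul1r.
Qed.

Lemma expect_sumseq t (g : prof -> R) :
  Ex t (fun h => \sum_(q <- h) g q) = t%:R * \sum_(p : prof) wt p * g p.
Proof.
elim: t => [|t IH]; first by rewrite expect0 big_nil mul0r.
rewrite expect_cons.
under eq_bigr => p _.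
  rewrite (@expect_ext _ _ (fun r => g p + \sum_(q <- r) g q)); last first.
    by move=> h _; rewrite big_cons.
  rewrite expectD expect_const IH mulrDr.
  over.
rewrite big_split /= -mulr_suml wt_sum mul1r.
by rewrite mulrS mulrDl mul1r.
Qed.

Lemma expect_marg t (j : 'I_n) (G : forall k, S k -> R) :
  Ex t (fun h => \sum_(q <- h) G j (q j)) = t%:R * \sum_(w : S j) lik j w thstar * G j w.
Proof.
rewrite (expect_sumseq t (fun q => G j (q j))); congr (_ * _).
pose F k (w : S k) := lik k w thstar * (if k == j then G k w else 1).
transitivity (\sum_(p : prof) \prod_k F k (p k)).
  apply: eq_bigr => p _; rewrite /F big_split /=; congr (_ * _).
  rewrite (bigD1 j) //= eqxx big1 ?mulr1 // => k kj.
  by rewrite (negbTE kj).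
rewrite sum_dffun (bigD1 j) //= [X in _ * X]big1 ?mulr1; last first.
  move=> k kj; rewrite /F (negbTE kj); under eq_bigr do rewrite mulr1.
  exact: lik_sum.
by apply: eq_bigr => w _; rewrite /F eqxx.
Qed.

Lemma ln_prod (I : Type) (s : seq I) (P : pred I) (F : I -> R) :
  (forall i, 0 < F i) -> ln (\prod_(i <- s | P i) F i) = \sum_(i <- s | P i) ln (F i).
Proof.
move=> Fpos; elim: s => [|x s IH]; first by rewrite !big_nil ln1.
rewrite !big_cons; case: (P x) => //.
by rewrite lnM ?IH // posrE // prodr_gt0.
Qed.

Lemma ln_ratio (a b z : R) : 0 < a -> 0 < b -> 0 < z ->
  ln ((a / z) / (b / z)) = ln a - ln b.
Proof.
move=> a0 b0 z0.
have -> : (a / z) / (b / z) = a / b by field; rewrite ?gt_eqF.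
by rewrite ln_div // posrE.
Qed.

Variables (E : rel 'I_n) (th : T).
Local Notation bel := (belief lik E).

Lemma card_T_pos : 0 < (#|T|%:R : R).
Proof. by rewrite ltr0n; apply/card_gt0P; exists thstar. Qed.

Lemma cumlik_pos j h x : 0 < cumlik lik j h x.
Proof. by apply: prodr_gt0 => q _. Qed.

Lemma belief_pos h : forall j x, 0 < bel h j x.
Proof.
elim: h => [|p r IH] j x /=; first by rewrite invr_gt0 card_T_pos.
have Vpos y : 0 < cumlik lik j (p :: r) y *
   \prod_(k | (k == j) || (k \in in_nbrs E j))
      bel r k y `^ ((#|in_nbrs E j|.+1)%:R^-1).
  by rewrite mulr_gt0 ?cumlik_pos // prodr_gt0 // => k _; rewrite powR_gt0.
rewrite divr_gt0 //. 
rewrite (bigD1 x) //= ltr_pwDl ?Vpos // sumr_ge0 // => y _.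
exact: ltW.
Qed.

Definition psi (h : seq prof) j := ln (bel h j th / bel h j thstar).
Definition ell k (w : S k) := ln (lik k w th / lik k w thstar).
Definition cw (j : 'I_n) : R := ((#|in_nbrs E j|.+1)%:R)^-1.
Definition Nb (j k : 'I_n) := (k == j) || (k \in in_nbrs E j).


Lemma psi_cons p r j :
  psi (p :: r) j = \sum_(q <- p :: r) ell j (q j) + cw j * \sum_(k | Nb j k) psi r k.
Proof.
pose V y := cumlik lik j (p :: r) y *
   \prod_(k | (k == j) || (k \in in_nbrs E j))
      bel r k y `^ ((#|in_nbrs E j|.+1)%:R^-1).
have Vpos y : 0 < V y.
  by apply: mulr_gt0; [exact: cumlik_pos | apply: prodr_gt0 => k _; exact/powR_gt0/belief_pos].
have lnV y : ln (V y) = \sum_(q <- p :: r) ln (lik j (q j) y) +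
     cw j * \sum_(k | Nb j k) ln (bel r k y).
  rewrite /V lnM; last 2 first.
  - by rewrite posrE cumlik_pos.
  - by rewrite posrE prodr_gt0 // => k _; rewrite powR_gt0 ?belief_pos.
  rewrite /cumlik ln_prod // ln_prod; last by move=> k; rewrite powR_gt0 ?belief_pos.
  by rewrite mulr_sumr; congr (_ + _); apply: eq_bigr => k _; rewrite ln_powR.
rewrite /psi /= -/(V th) -/(V thstar).
rewrite ln_ratio //; last first.
  rewrite (bigD1 th) //= ltr_pwDl //; [exact: (Vpos th) | apply: sumr_ge0 => y _; exact/ltW/(Vpos y)].
rewrite !lnV /ell.
under eq_bigr do rewrite ln_div ?posrE //.
under [X in _ = _ + _ * X]eq_bigr do rewrite /psi ln_div ?posrE ?belief_pos //.
rewrite sumrB [X in _ = _ + _ * X]sumrB; ring.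
Qed.

Definition Dv (k : 'I_n) : R := KL (fun w => lik k w thstar) (fun w => lik k w th).

Lemma ell_flip k (w : S k) : ln (lik k w thstar / lik k w th) = - ell k w.
Proof. by rewrite /ell -lnV ?invf_div // posrE divr_gt0. Qed.

Lemma sum_ell k : \sum_(w : S k) lik k w thstar * ell k w = - Dv k.
Proof.
rewrite /Dv /KL -sumrN; apply: eq_bigr => w _.
by rewrite ell_flip mulrN opprK.
Qed.

Lemma expect_psi_cons t j :
  Ex t.+1 (fun h => psi h j) =
  - (t.+1%:R * Dv j) + cw j * \sum_(k | Nb j k) Ex t (fun h => psi h k).
Proof.
rewrite expect_cons.
under eq_bigr => p _.
  rewrite (@expect_ext t _ (fun r => \sum_(q <- p :: r) ell j (q j) +
                 cw j * \sum_(k | Nb j k) psi r k)); last first.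
    by move=> h _; rewrite psi_cons.
  rewrite expectD expectZ expect_sum mulrDr.
  over.
rewrite big_split /= -mulr_suml wt_sum mul1r.
rewrite -(expect_cons t (fun h => \sum_(q <- h) ell j (q j))).
by rewrite (expect_marg _ _ (fun k (w : S k) => ell k w)) sum_ell mulrN.
Qed.

Lemma expect_psi0 j : Ex 0 (fun h => psi h j) = 0.
Proof.
by rewrite expect0 /psi /= divff ?ln1 // invr_eq0 gt_eqF // card_T_pos.
Qed.
End Main.

Section Graph.
Variables (R : realType) (n : nat) (E : rel 'I_n).
Hypothesis sc : forall i j : 'I_n, connect E i j.
Local Notation c := (cw R n E).
Local Notation ninv := ((n%:R : R)^-1).

Definition Aop (v : 'I_n -> R) : 'I_n -> R := fun j => c j * \sum_(k | Nb n E j k) v k.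

Lemma card_Nb j : #|[pred k | Nb n E j k]| = #|in_nbrs E j|.+1.
Proof.
rewrite (@eq_card _ _ [predU1 j & in_nbrs E j]) ?cardU1; last by [].
by rewrite inE eqxx.
Qed.

Lemma npos (j : 'I_n) : 0 < (n%:R : R).
Proof. by rewrite ltr0n; case: j => m /= mn; apply: leq_ltn_trans (leq0n m) mn. Qed.

Lemma cw_pos j : 0 < c j.
Proof. by rewrite /cw invr_gt0 ltr0n. Qed.

Lemma cw_ge j : ninv <= c j.
Proof.
have n0 := npos j; rewrite ltr0n in n0.
rewrite /cw lef_pV2 ?posrE ?ltr0n // ler_nat -card_Nb.
by rewrite -[X in (_ <= X)%N](card_ord n) max_card.
Qed.

Lemma cw_mul j : c j * (#|in_nbrs E j|.+1)%:R = 1.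
Proof. by rewrite /cw mulVf // pnatr_eq0. Qed.

Lemma Aop_ext v w j : (forall k, v k = w k) -> Aop v j = Aop w j.
Proof. by move=> vw; rewrite /Aop; congr (_ * _); apply: eq_bigr => k _. Qed.

Lemma Aop_ge0 v j : (forall k, 0 <= v k) -> 0 <= Aop v j.
Proof. by move=> v0; rewrite /Aop mulr_ge0 ?sumr_ge0 // ltW // cw_pos. Qed.

Lemma Aop_term v j k : (forall k, 0 <= v k) -> Nb n E j k -> ninv * v k <= Aop v j.
Proof.
move=> v0 Nk; rewrite /Aop (bigD1 k) //= (le_trans (y := c j * v k)) //.
  by rewrite ler_wpM2r // cw_ge.
apply: ler_wpM2l; first exact/ltW/cw_pos.
by rewrite lerDl sumr_ge0.
Qed.

Lemma Aop_min v j m : (forall k, m <= v k) -> m <= Aop v j.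
Proof.
move=> vm; rewrite /Aop (le_trans (y := c j * \sum_(k | Nb n E j k) m)) //.
  by rewrite sumr_const card_Nb -mulr_natr mulrCA cw_mul mulr1.
apply: ler_wpM2l; first exact/ltW/cw_pos.
exact: ler_sum.
Qed.

Lemma AopD v w j : Aop (fun k => v k + w k) j = Aop v j + Aop w j.
Proof. by rewrite /Aop big_split mulrDr. Qed.

Lemma AopN v j : Aop (fun k => - v k) j = - Aop v j.
Proof. by rewrite /Aop sumrN mulrN. Qed.

Lemma Aop0 j : Aop (fun _ => 0) j = 0.
Proof. by rewrite /Aop big1 ?mulr0. Qed.

Lemma Aop_sum m (w : nat -> 'I_n -> R) j :
  Aop (fun k => \sum_(r < m) w r k) j = \sum_(r < m) Aop (w r) j.
Proof. by rewrite /Aop exchange_big mulr_sumr. Qed.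

Lemma iter_ext q v w j : (forall k, v k = w k) -> iter q Aop v j = iter q Aop w j.
Proof.
elim: q j => [|q IH] j vw /=; first exact: vw.
by apply: Aop_ext => k; apply: IH.
Qed.

Lemma iter_ge0 q v j : (forall k, 0 <= v k) -> 0 <= iter q Aop v j.
Proof. by elim: q j => [|q IH] j v0 //=; apply: Aop_ge0 => k; apply: IH. Qed.

Lemma iter_min q v j m : (forall k, m <= v k) -> m <= iter q Aop v j.
Proof. by elim: q j => [|q IH] j vm //=; apply: Aop_min => k; apply: IH. Qed.

Lemma iter_self q v j : (forall k, 0 <= v k) -> ninv ^+ q * v j <= iter q Aop v j.
Proof.
elim: q j => [|q IH] j v0 /=; first by rewrite expr0 mul1r.
have h1 : ninv * iter q Aop v j <= Aop (iter q Aop v) j.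
  by apply: Aop_term; [move=> k; apply: iter_ge0 | rewrite /Nb eqxx].
apply: le_trans h1; rewrite exprS -mulrA.
by apply: ler_wpM2l; [rewrite invr_ge0 ler0n | apply: IH].
Qed.

Lemma walk p k v : (forall x, 0 <= v x) -> path E k p ->
  ninv ^+ (size p) * v k <= iter (size p) Aop v (last k p).
Proof.
elim: p k v => [|l p IH] k v v0; first by rewrite /= expr0 mul1r.
move=> /andP[ekl pl]; rewrite iterSr.
have Av0 x : 0 <= Aop v x by apply: Aop_ge0.
apply: le_trans (IH l _ Av0 pl).
rewrite exprSr -mulrA; apply: ler_wpM2l; first by rewrite exprn_ge0 // invr_ge0 ler0n.
apply: Aop_term => //; rewrite /Nb.
have [->|kl] := eqVneq k l; first by [].
by rewrite inE kl ekl orbT.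
Qed.

Lemma short_path k j : exists p, [/\ path E k p, last k p = j & (size p <= n.-1)%N].
Proof.
have /connectP [p pth ->] := sc k j.
case: (shortenP pth) => p' pth' up' _.
exists p'; split => //.
have := max_card (mem (k :: p')); rewrite card_ord.
by move/card_uniqP: up' => -> /= h; rewrite -ltnS (leq_trans h) // leqSpred.
Qed.

Lemma iter_a v j k : (forall x, 0 <= v x) -> ninv ^+ n.-1 * v k <= iter n.-1 Aop v j.
Proof.
move=> v0; have [p [pth lj sz]] := short_path k j.
rewrite -(subnK sz) iterD exprD -mulrA.
have h1 := @iter_self (n.-1 - size p) (iter (size p) Aop v) j.
apply: le_trans (h1 _); last by move=> x; apply: iter_ge0.
apply: ler_wpM2l; first by rewrite exprn_ge0 // invr_ge0 ler0n.
by rewrite -lj walk.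
Qed.

Lemma iter_big v r j : (forall x, 0 <= v x) -> (n.-1 <= r)%N ->
  ninv ^+ n * \sum_k v k <= iter r Aop v j.
Proof.
move=> v0 ar; rewrite -(subnK ar) iterD.
apply: iter_min => x.
have n0 : (0 < n)%N by case: x => m /= mn; apply: leq_ltn_trans (leq0n m) mn.
have e : ninv ^+ n = ninv * ninv ^+ n.-1 by rewrite -exprS prednK.
rewrite e -mulrA ler_pdivrMl ?(npos x) //.
have e2 : n%:R * iter n.-1 Aop v x = \sum_(k < n) iter n.-1 Aop v x.
  by rewrite sumr_const card_ord mulr_natl.
rewrite e2 mulr_sumr.
by apply: ler_sum => k _; apply: iter_a.
Qed.

End Graph.

Section Growth.
Variables (R : realType) (n : nat) (E : rel 'I_n).
Hypothesis sc : forall i j : 'I_n, connect E i j.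
Variable D : 'I_n -> R.
Hypothesis D0 : forall k, 0 <= D k.
Local Notation A := (Aop R n E).
Local Notation ninv := ((n%:R : R)^-1).

Fixpoint ff (t : nat) : 'I_n -> R :=
  match t with
  | 0 => fun _ => 0
  | t'.+1 => fun j => t'.+1%:R * D j + A (ff t') j
  end.

Definition uu r := iter r A D.
Definition gg t j := \sum_(r < t) uu r j.

Lemma ff_step t j : ff t.+1 j = ff t j + gg t.+1 j.
Proof.
elim: t j => [|t IH] j.
  by rewrite /gg big_ord1 /= Aop0 mul1r addr0 add0r.
have -> : ff t.+2 j = t.+2%:R * D j + A (ff t.+1) j by [].
rewrite (@Aop_ext R n E _ _ _ IH) AopD.
have -> : ff t.+1 j = t.+1%:R * D j + A (ff t) j by [].
rewrite /gg big_ord_recl /=.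
have -> : \sum_(i < t.+1) uu (bump 0 i) j = A (fun k => \sum_(r < t.+1) uu r k) j.
  by rewrite Aop_sum; apply: eq_bigr => r _.
rewrite (mulrS _ t.+1); ring.
Qed.

Definition cc := ninv ^+ n * \sum_k D k.

Lemma cc_ge0 : 0 <= cc.
Proof. by rewrite /cc mulr_ge0 ?exprn_ge0 ?invr_ge0 ?ler0n ?sumr_ge0. Qed.

Lemma uu_ge0 r j : 0 <= uu r j.
Proof. exact: (@iter_ge0 R n E). Qed.

Lemma gg_lower t j : cc * (t%:R - (n.-1)%:R) <= gg t j.
Proof.
elim: t => [|t IH].
  rewrite /gg big_ord0 sub0r mulrN oppr_le0.
  by rewrite mulr_ge0 ?cc_ge0 ?ler0n.
rewrite /gg big_ord_recr /= -/(gg t j).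
have [ha|ta] := leqP n.-1 t.
  have h := @iter_big R n E sc D t j D0 ha.
  rewrite -/(uu t) -/cc in h.
  have e : cc * ((t.+1)%:R - (n.-1)%:R) = cc * (t%:R - (n.-1)%:R) + cc.
    by rewrite -addn1 natrD; ring.
  rewrite e; lra.
apply: (le_trans (y := 0)).
  by rewrite mulr_ge0_le0 ?cc_ge0 // subr_le0 ler_nat.
rewrite addr_ge0 ?uu_ge0 //.
by rewrite /gg sumr_ge0 // => r _; apply: uu_ge0.
Qed.

Lemma ff_lower t j : cc * (t%:R ^+ 2 + t%:R - 2 * (n.-1)%:R * t%:R) <= 2 * ff t j.
Proof.
elim: t j => [|t IH] j.
  have -> : cc * ((0%:R : R) ^+ 2 + 0%:R - 2 * (n.-1)%:R * 0%:R) = 0 by ring.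
  by rewrite /= mulr0.
rewrite ff_step.
have h1 := IH j; have h2 := gg_lower t.+1 j.
have e : cc * ((t.+1)%:R ^+ 2 + (t.+1)%:R - 2 * (n.-1)%:R * (t.+1)%:R) =
   cc * (t%:R ^+ 2 + t%:R - 2 * (n.-1)%:R * t%:R) + 2 * (cc * ((t.+1)%:R - (n.-1)%:R)).
  by rewrite -addn1 natrD; ring.
rewrite e; lra.
Qed.

End Growth.

Section Final.
Variables (R : realType) (T : finType) (thstar : T) (n : nat)
  (S : 'I_n -> finType) (lik : forall i : 'I_n, S i -> T -> R).
Hypothesis lik_pos : forall (i : 'I_n) (w : S i) (th : T), 0 < lik i w th.
Hypothesis lik_sum : forall (i : 'I_n) (th : T), \sum_(w : S i) lik i w th = 1.
Variables (E : rel 'I_n) (th : T).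

Local Notation D := (Dv R T thstar n S lik th).

Lemma expect_ff t j :
  expect lik thstar t (fun h => psi R T thstar n S lik E th h j) = - ff R n E D t j.
Proof.
elim: t j => [|t IH] j; first by rewrite expect_psi0 oppr0.
rewrite expect_psi_cons //.
have -> : ff R n E D t.+1 j = t.+1%:R * D j + Aop R n E (ff R n E D t) j by [].
rewrite opprD -(AopN R n E (ff R n E D t) j) /Aop.
congr (_ + _ * _); apply: eq_bigr => k _; exact: IH.
Qed.

Lemma KL_ge0 k a b : 0 <= KL (fun w => lik k w a) (fun w => lik k w b).
Proof.
rewrite /KL.
have h w : lik k w a - lik k w b <= lik k w a * ln (lik k w a / lik k w b).
  have pa := lik_pos k w a; have pb := lik_pos k w b.
  have e : ln (lik k w a / lik k w b) = - ln (lik k w b / lik k w a).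
    by rewrite -lnV ?invf_div // posrE divr_gt0.
  have q0 : 0 < lik k w b / lik k w a by rewrite divr_gt0.
  have l' : ln (lik k w b / lik k w a) <= lik k w b / lik k w a - 1.
    have := @le_ln1Dx R (lik k w b / lik k w a - 1).
    by rewrite addrCA subrr addr0; apply; lra.
  rewrite e mulrN -mulrN.
  have -> : lik k w a - lik k w b = lik k w a * (- (lik k w b / lik k w a - 1)).
    by field; rewrite gt_eqF.
  by apply: ler_wpM2l; [exact: ltW | rewrite lerN2].
apply: le_trans (ler_sum _ (fun w _ => h w)).
by rewrite sumrB !lik_sum subrr.
Qed.

Lemma D_le k C0 : (forall w : S k, - C0 <= ell R T thstar n S lik th k w) -> D k <= C0.
Proof.
move=> hC; rewrite -[D k]opprK -(sum_ell _ _ _ _ _ _ lik_pos) lerNl.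
rewrite -[X in X <= _]mul1r -(lik_sum k thstar) mulr_suml.
by apply: ler_sum => w _; apply: ler_wpM2l; [exact: ltW | exact: hC].
Qed.

End Final.

Theorem lemma4 (R : realType) (T : finType) (thstar : T) (n : nat)
  (S : 'I_n -> finType) (lik : forall i : 'I_n, S i -> T -> R)
  (E : rel 'I_n) (C0 C1 : R)
  (lik_pos : forall (i : 'I_n) (w : S i) (th : T), 0 < lik i w th)
  (lik_sum : forall (i : 'I_n) (th : T), \sum_(w : S i) lik i w th = 1)
  (strongly_connected : forall i j : 'I_n, connect E i j)
  (C0_def : is_min_of (fun v : R => exists (i : 'I_n) (th1 th2 : T) (w : S i),
                th1 != th2 /\ v = ln (lik i w th1 / lik i w th2)) (- C0))
  (C1_def : is_min_of (fun v : R => exists th th' : T,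
                th != th' /\
                v = \sum_(i : 'I_n) KL (fun w => lik i w th') (fun w => lik i w th))
              C1)
  (th : T) (th_ne : th != thstar) (i : 'I_n) (t : nat) (t_ge1 : (1 <= t)%N) :
  let lambda := (1 - (n%:R^-1) ^+ n) `^ (n%:R^-1) in
  expect lik thstar t
    (fun h => ln (belief lik E h i th / belief lik E h i thstar))
  <= n%:R * C0 / ((1 - (n%:R ^+ n)^-1) * (1 - lambda)) * t%:R
     - C1 / (2 * n%:R ^+ n) * t%:R ^+ 2.
Proof.
cbv zeta.
set lambda := (1 - (n%:R^-1) ^+ n) `^ (n%:R^-1).
pose D := Dv R T thstar n S lik th.
have D0 k : 0 <= D k by apply: KL_ge0.
have DC0 k : D k <= C0.
  apply: D_le => // w; apply: C0_def.2.
  by exists k, th, thstar, w; split.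
have C1le : C1 <= \sum_k D k.
  by apply: C1_def.2; exists th, thstar; split.
have C1ge0 : 0 <= C1.
  case: C1_def => [[a [b [_ ->]]] _].
  by apply: sumr_ge0 => k _; apply: KL_ge0.
have C0ge0 : 0 <= C0 := le_trans (D0 i) (DC0 i).
have -> : expect lik thstar t
    (fun h => ln (belief lik E h i th / belief lik E h i thstar)) = - ff R n E D t i.
  exact: (expect_ff _ _ _ _ _ _ lik_pos lik_sum E th t i).
have fl := ff_lower _ _ _ strongly_connected _ D0 t i.
set F := ff R n E D t i in fl *.
set cc0 := cc R n D in fl.
set N := (n%:R : R) in lambda fl *.
set Tt := (t%:R : R) in fl *.
set a := ((n.-1)%:R : R) in fl.
have n0 : (0 < n)%N by case: (i) => m /= mn; apply: leq_ltn_trans (leq0n m) mn.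
have Npos : 0 < N by rewrite /N ltr0n.
have Tt0 : 0 <= Tt by rewrite ler0n.
have a0 : 0 <= a by rewrite ler0n.
have Nn0 : 0 < N ^+ n by rewrite exprn_gt0.
have cc0ge : C1 / N ^+ n <= cc0.
  rewrite /cc0 /cc -/N exprVn mulrC.
  by apply: ler_wpM2l => //; rewrite invr_ge0 ltW.
have cc0ge0 : 0 <= cc0 by apply: le_trans cc0ge; rewrite divr_ge0 // ltW.
set K := N * C0 / ((1 - (N ^+ n)^-1) * (1 - lambda)).
have hK : cc0 * a <= K.
  have [n1|n2] := leqP n 1.
    have hn : n = 1%N.
      by apply/eqP; rewrite eqn_leq n1.
    have -> : a = 0 by rewrite /a hn.
    have -> : K = 0 by rewrite /K /N hn expr1n invr1 subrr mul0r invr0 mulr0.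
    by rewrite mulr0.
  have N1 : 1 < N ^+ n by rewrite exprn_egt1 ?ltr1n // -lt0n (leq_trans _ n2).
  set x0 := 1 - (N ^+ n)^-1.
  have x0pos : 0 < x0 by rewrite /x0 subr_gt0 invf_lt1.
  have x0lt1 : x0 < 1 by rewrite /x0 gtrBl invr_gt0.
  have lamE : lambda = sequences.expR (N^-1 * ln x0).
    by rewrite /lambda exprVn -/x0 /powR gt_eqF.
  have lam1 : lambda < 1.
    by rewrite lamE expR_lt1 pmulr_rlt0 ?invr_gt0 // ln_lt0 // x0pos x0lt1.
  have lam0 : 0 <= lambda by rewrite lamE ltW // expR_gt0.
  have Xpos : 0 < x0 * (1 - lambda) by rewrite mulr_gt0 // subr_gt0.
  have Xle1 : x0 * (1 - lambda) <= 1.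
    apply: mulr_ile1; [exact: ltW | by rewrite subr_ge0 ltW | exact: ltW | lra].
  have NK : N * C0 <= K.
    by rewrite /K ler_pdivlMr // ler_piMr // mulr_ge0 // ltW.
  apply: le_trans NK.
  have SD : \sum_k D k <= N * C0.
    apply: (le_trans (y := \sum_(k < n) C0)); first by apply: ler_sum.
    by rewrite sumr_const card_ord mulr_natl.
  apply: le_trans SD.
  rewrite /cc0 /cc -/N exprVn mulrAC.
  apply: ler_piMl; first by apply: sumr_ge0 => k _.
  rewrite mulrC ler_pdivrMr // mul1r.
  rewrite /a -natrX ler_nat (leq_trans (leq_pred n)) //.
  exact: ltnW (ltn_expl _ (n2 : (1 < n)%N)).
have h1 : C1 / N ^+ n * Tt ^+ 2 <= cc0 * Tt ^+ 2.
  by apply: ler_wpM2r; rewrite // exprn_ge0.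
have h2 : 0 <= cc0 * Tt by rewrite mulr_ge0.
have h3 : cc0 * a * Tt <= K * Tt by apply: ler_wpM2r.
have e1 : cc0 * (Tt ^+ 2 + Tt - 2 * a * Tt) =
          cc0 * Tt ^+ 2 + cc0 * Tt - 2 * (cc0 * a * Tt) by ring.
have e2 : C1 / (2 * N ^+ n) * Tt ^+ 2 = (C1 / N ^+ n * Tt ^+ 2) / 2.
  by field; rewrite gt_eqF.
rewrite e1 in fl; rewrite e2.
lra.
Qed.
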